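(* Let $f$ be analytic on $\mathbb{D}$ with $f(z)=z+\sum_{n=2}^{\infty}a_nz^n$ and $\operatorname{Re}f'(z)>0$ for all $z\in\mathbb{D}$, and let $\gamma_1=\frac12a_2$, $\gamma_2=\frac12\left(a_3-\frac12a_2^2\right)$. Then $$-\frac{1}{\sqrt5}\le|\gamma_2|-|\gamma_1|\le\frac13.$$ Both inequalities are sharp.
   Context: $\mathbb{D}=\{z\in\mathbb{C}:|z|<1\}$. The class of such $f$ is the class $\mathcal{R}$ of functions of bounded turning. $\gamma_1,\gamma_2$ are the first two logarithmic coefficients, defined by $\log\frac{f(z)}{z}=2\sum_{n\ge1}\gamma_nz^n$ near $0$. *)

(* Defs.v *)
From Stdlib Require Import Reals.
From Coquelicot Require Import Coquelicot.

Open Scope R_scope.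

Definition unit_disk (z : C) : Prop := Cmod z < 1.

Definition normalized_analytic (f : C -> C) (a : nat -> C) : Prop :=
  a 0%nat = RtoC 0 /\ a 1%nat = RtoC 1 /\
  forall z : C, unit_disk z -> is_series (fun n : nat => (a n * z ^ n)%C) (f z).

Definition bounded_turning (f : C -> C) : Prop :=
  forall z : C, unit_disk z ->
    exists l : C, is_derive (K := C_AbsRing) (V := C_NormedModule) f z l /\ 0 < Re l.

Definition in_class_R (f : C -> C) (a : nat -> C) : Prop :=
  normalized_analytic f a /\ bounded_turning f.

(* First two logarithmic coefficients, via log(f(z)/z) = 2 sum gamma_n z^n. *)
Definition gamma1 (a : nat -> C) : C := (/ 2 * a 2%nat)%C.
Definition gamma2 (a : nat -> C) : C := (/ 2 * (a 3%nat - / 2 * (a 2%nat * a 2%nat)))%C.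

Definition logcoef_diff (a : nat -> C) : R := Cmod (gamma2 a) - Cmod (gamma1 a).

(* Main.v *)
Require Import Defs.
From Stdlib Require Import Reals Lra Lia ClassicalEpsilon.
From Coquelicot Require Import Coquelicot.
Open Scope R_scope.

Lemma series_Cmod_le (u : nat -> C) (b : nat -> R) (s : C) (SS : R) :
  is_series u s -> is_series b SS -> (forall n, Cmod (u n) <= b n) -> Cmod s <= SS.
Proof.
  intros Hu Hb Hle.
  assert (Hp: forall n, Cmod (sum_n u n) <= sum_n b n).
  { induction n. rewrite !sum_O. apply Hle. rewrite !sum_Sn.
    eapply Rle_trans. apply (Cmod_triangle (sum_n u n) (u (S n))).
    change (plus (sum_n b n) (b (S n))) with (sum_n b n + b (S n)).
    specialize (Hle (S n)). lra. }
  apply (is_lim_seq_le (fun n => Cmod (sum_n u n)) (sum_n b) (Cmod s) SS).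
  - exact Hp.
  - eapply filterlim_comp. exact Hu. apply (filterlim_norm (K:=C_AbsRing) s).
  - exact Hb.
Qed.

Lemma series_term_bounded (u : nat -> C) (s : C) :
  is_series u s -> exists M, forall n, Cmod (u n) <= M.
Proof.
  intros Hu.
  destruct (filterlim_bounded (K:=C_AbsRing) (sum_n u)) as [M HM].
  { exists s. exact Hu. }
  exists (2*M). intros n. destruct n.
  - assert (H:=HM 0%nat). rewrite sum_O in H. assert (0 <= M).
    { eapply Rle_trans. 2: exact H. apply Cmod_ge_0. } change (norm (u 0%nat)) with (Cmod (u 0%nat)) in H. lra.
  - assert (H1:=HM n). assert (H2:=HM (S n)). rewrite sum_Sn in H2.
    change (norm (sum_n u n)) with (Cmod (sum_n u n)) in H1.
    change (norm (plus (sum_n u n) (u (S n)))) with (Cmod (sum_n u n + u (S n))%C) in H2.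
    replace (u (S n)) with ((sum_n u n + u (S n)) - sum_n u n)%C by ring.
    eapply Rle_trans. unfold Cminus. apply Cmod_triangle. rewrite Cmod_opp. lra.
Qed.

Lemma pow_le_one (t : R) (n : nat) : 0 <= t <= 1 -> t ^ n <= 1.
Proof. intros H. induction n; simpl. lra. assert (0 <= t ^ n) by (apply pow_le; lra). nra. Qed.

Lemma ntn_bound (t : R) (n : nat) : 0 <= t < 1 -> INR n * t ^ n * (1 - t) <= 1.
Proof.
  intros Ht. induction n.
  - simpl. lra.
  - rewrite S_INR. simpl.
    assert (0 <= t ^ n) by (apply pow_le; lra).
    assert (t ^ n <= 1) by (apply pow_le_one; lra).
    assert (H1: t * (INR n * t ^ n * (1 - t)) <= t * 1) by (apply Rmult_le_compat_l; lra).
    assert (H2: t * t ^ n * (1 - t) <= 1 * (1 - t)) by (apply Rmult_le_compat_r; nra).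
    replace ((INR n + 1) * (t * t ^ n) * (1 - t)) with (t * (INR n * t ^ n * (1 - t)) + t * t ^ n * (1 - t)) by ring.
    lra.
Qed.

Lemma n2_bound (t : R) (n : nat) : 0 < t < 1 ->
  (INR n + 1) ^ 2 * t ^ (3 * n) <= t ^ n * / (t * (1 - t)) ^ 2.
Proof.
  intros Ht. pose proof (ntn_bound t (S n) ltac:(lra)) as H.
  rewrite S_INR in H. simpl in H.
  set (X := (INR n + 1) * t ^ n).
  assert (HX0 : 0 <= X). { unfold X. apply Rmult_le_pos. pose proof (pos_INR n); lra. apply pow_le; lra. }
  assert (HX : X * (t * (1 - t)) <= 1) by (unfold X; nra).
  assert (Htn : 0 < t ^ n) by (apply pow_lt; lra).
  replace (t ^ (3 * n)) with (t ^ n * t ^ n * t ^ n).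
  2:{ replace (3 * n)%nat with (n + n + n)%nat by lia. rewrite !pow_add. ring. }
  replace ((INR n + 1) ^ 2 * (t ^ n * t ^ n * t ^ n)) with (X * X * t ^ n) by (unfold X; ring).
  assert (Hd : 0 < t * (1 - t)) by nra.
  apply Rmult_le_reg_r with ((t * (1 - t)) ^ 2). apply pow_lt; lra.
  rewrite (Rmult_assoc (t ^ n)). rewrite Rinv_l. 2: apply pow_nonzero; lra.
  replace (X * X * t ^ n * (t * (1 - t)) ^ 2) with ((X * (t * (1-t))) * (X * (t * (1-t))) * t ^ n) by ring.
  assert (0 <= X * (t * (1-t))) by nra.
  assert ((X * (t * (1-t))) * (X * (t * (1-t))) <= 1) by nra.
  nra.
Qed.

Lemma ex_series_n2 (t : R) : 0 < t < 1 -> ex_series (fun n => (INR n + 1) ^ 2 * t ^ (3 * n)).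
Proof.
  intros Ht. apply (@ex_series_le R_AbsRing R_CompleteNormedModule _ (fun n => t ^ n * / (t * (1 - t)) ^ 2)).
  - intros n. change (norm ((INR n + 1) ^ 2 * t ^ (3 * n))) with (Rabs ((INR n + 1) ^ 2 * t ^ (3 * n))).
    rewrite Rabs_pos_eq. apply n2_bound; auto.
    apply Rmult_le_pos. apply pow_le. pose proof (pos_INR n); lra. apply pow_le; lra.
  - apply (ex_series_ext (fun n => scal (/ (t * (1 - t)) ^ 2) (t ^ n))).
    intros n. unfold scal; simpl. unfold mult; simpl. ring.
    apply (@ex_series_scal R_AbsRing R_NormedModule). apply ex_series_geom. rewrite Rabs_pos_eq; lra.
Qed.

Lemma coef_bound (a : nat -> C) (f : C -> C) :
  (forall z, unit_disk z -> is_series (fun n => (a n * z ^ n)%C) (f z)) ->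
  forall rho, 0 < rho < 1 -> exists M t, 0 < t < 1 /\ 0 <= M /\
    forall n, Cmod (a n) * rho ^ n <= M * t ^ (3 * n).
Proof.
  intros Hs rho Hr.
  set (t := (2 + rho) / 3).
  assert (Ht : 0 < t < 1) by (unfold t; lra).
  assert (Ht3 : rho < t ^ 3).
  { unfold t. replace (((2 + rho) / 3) ^ 3) with (rho + (1 - rho) ^ 2 * (rho + 8) / 27) by (simpl; field).
    assert (0 < (1 - rho) ^ 2) by (apply pow_lt; lra). nra. }
  set (r' := rho / t ^ 3).
  assert (Ht3p : 0 < t ^ 3) by (apply pow_lt; lra).
  assert (Hr' : 0 < r' < 1).
  { unfold r'. split. apply Rdiv_lt_0_compat; lra.
    apply Rmult_lt_reg_r with (t ^ 3); auto. unfold Rdiv. rewrite Rmult_assoc, Rinv_l; lra. }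
  assert (Hd : unit_disk (RtoC r')). { unfold unit_disk. rewrite Cmod_R, Rabs_pos_eq; lra. }
  destruct (series_term_bounded _ _ (Hs _ Hd)) as [M HM].
  exists M, t. split; auto. split.
  - eapply Rle_trans. 2: apply (HM 0%nat). apply Cmod_ge_0.
  - intros n. specialize (HM n). rewrite Cmod_mult, <- RtoC_pow, Cmod_R, Rabs_pos_eq in HM.
    2: apply pow_le; lra.
    replace (rho ^ n) with (r' ^ n * t ^ (3 * n)).
    + rewrite <- Rmult_assoc. apply Rmult_le_compat_r. apply pow_le; lra. exact HM.
    + rewrite pow_mult, <- Rpow_mult_distr. unfold r'. f_equal. field. lra.
Qed.

Definition dcoef (a : nat -> C) (n : nat) : C := (RtoC (INR (S n)) * a (S n))%C.

Definition Erem (w z : C) (n : nat) : C :=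
  (w ^ (S n) - z ^ (S n) - RtoC (INR (S n)) * z ^ n * (w - z))%C.

Lemma Erem_S w z n : Erem w z (S n) = (w * Erem w z n + RtoC (INR (S n)) * z ^ n * (w - z) * (w - z))%C.
Proof.
  unfold Erem. rewrite (S_INR (S n)). rewrite RtoC_plus. simpl. ring.
Qed.

Lemma Erem_bound (w z : C) (rho : R) n : 0 < rho -> Cmod w <= rho -> Cmod z <= rho ->
  rho * Cmod (Erem w z n) <= INR n ^ 2 * rho ^ n * Cmod (w - z) ^ 2.
Proof.
  intros Hr Hw Hz. induction n.
  - unfold Erem. simpl. replace (w * 1 - z * 1 - RtoC 1 * 1 * (w - z))%C with (RtoC 0) by (simpl; ring).
    rewrite Cmod_0. simpl. nra.
  - rewrite Erem_S.
    assert (Hh : 0 <= Cmod (w - z)) by apply Cmod_ge_0.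
    assert (HE : 0 <= Cmod (Erem w z n)) by apply Cmod_ge_0.
    assert (Hzn : Cmod z ^ n <= rho ^ n) by (apply pow_incr; split; [apply Cmod_ge_0| auto]).
    assert (Hrn : 0 <= rho ^ n) by (apply pow_le; lra).
    assert (Hn : 0 <= INR n) by apply pos_INR.
    eapply Rle_trans. apply Rmult_le_compat_l. lra. apply Cmod_triangle.
    rewrite !Cmod_mult, Cmod_pow, Cmod_R, Rabs_pos_eq by apply pos_INR.
    rewrite S_INR. simpl.
    assert (H1 : rho * (Cmod w * Cmod (Erem w z n)) <= rho * (INR n ^ 2 * rho ^ n * Cmod (w - z) ^ 2)).
    { replace (rho * (Cmod w * Cmod (Erem w z n))) with (Cmod w * (rho * Cmod (Erem w z n))) by ring.
      apply Rle_trans with (rho * (rho * Cmod (Erem w z n))).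
      apply Rmult_le_compat_r; nra. apply Rmult_le_compat_l; lra. }
    assert (H2 : (INR n + 1) * Cmod z ^ n * Cmod (w - z) * Cmod (w - z) <= (INR n + 1) * rho ^ n * (Cmod (w - z) * Cmod (w - z))).
    { replace ((INR n + 1) * Cmod z ^ n * Cmod (w - z) * Cmod (w - z)) with ((INR n + 1) * Cmod z ^ n * (Cmod (w - z) * Cmod (w - z))) by ring.
      apply Rmult_le_compat_r. nra. apply Rmult_le_compat_l. lra. auto. }
    simpl in H1.
    assert (H3: 0 <= rho * rho ^ n * (Cmod (w - z) * Cmod (w - z))).
    { apply Rmult_le_pos. nra. nra. }
    nra.
Qed.

Lemma dcoef_bound (a : nat -> C) (rho M t : R) : 0 < rho -> 0 < t < 1 -> 0 <= M ->
  (forall n, Cmod (a n) * rho ^ n <= M * t ^ (3 * n)) ->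
  forall n, Cmod (a (S n)) * rho ^ n <= M / rho * t ^ (3 * n).
Proof.
  intros Hr Ht HM H n. specialize (H (S n)).
  assert (Ht3 : t ^ (3 * S n) <= t ^ (3 * n)).
  { replace (3 * S n)%nat with (3 + 3 * n)%nat by lia. rewrite pow_add.
    assert (t ^ 3 <= 1) by (apply pow_le_one; lra).
    assert (0 <= t ^ (3 * n)) by (apply pow_le; lra). nra. }
  change (rho ^ S n) with (rho * rho ^ n) in H. apply Rmult_le_reg_l with rho; auto.
  replace (rho * (M / rho * t ^ (3 * n))) with (M * t ^ (3 * n)) by (field; lra).
  assert (0 <= M * t ^ (3 * S n) <= M * t ^ (3 * n)).
  { split. apply Rmult_le_pos; auto. apply pow_le; lra. apply Rmult_le_compat_l; auto. }
  replace (rho * (Cmod (a (S n)) * rho ^ n)) with (Cmod (a (S n)) * (rho * rho ^ n)) by ring.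
  lra.
Qed.

Lemma dser_exists (a : nat -> C) (g : C -> C) :
  (forall z, unit_disk z -> is_series (fun n => (a n * z ^ n)%C) (g z)) ->
  forall z, unit_disk z -> exists pz, is_series (fun n => (dcoef a n * z ^ n)%C) pz.
Proof.
  intros Hs z Hz. unfold unit_disk in Hz.
  set (rho := (1 + Cmod z) / 2).
  assert (Hrho : 0 < rho < 1) by (unfold rho; pose proof (Cmod_ge_0 z); lra).
  destruct (coef_bound a g Hs rho Hrho) as [M [t [Ht [HM Hb]]]].
  pose proof (dcoef_bound a rho M t ltac:(lra) Ht HM Hb) as Hd.
  assert (Hex : ex_series (fun n => (dcoef a n * z ^ n)%C)).
  { apply (@ex_series_le C_AbsRing C_CompleteNormedModule _ (fun n => M / rho * ((INR n + 1) ^ 2 * t ^ (3 * n)))).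
    - intros n. change (norm (dcoef a n * z ^ n)%C) with (Cmod (dcoef a n * z ^ n)%C).
      unfold dcoef. rewrite !Cmod_mult, Cmod_pow, Cmod_R, Rabs_pos_eq by apply pos_INR.
      rewrite S_INR.
      assert (Hzn : Cmod z ^ n <= rho ^ n) by (apply pow_incr; split; [apply Cmod_ge_0| unfold rho; lra]).
      assert (0 <= Cmod (a (S n))) by apply Cmod_ge_0.
      assert (Hn : 0 <= INR n) by apply pos_INR.
      assert (H1 : Cmod (a (S n)) * Cmod z ^ n <= M / rho * t ^ (3 * n)).
      { eapply Rle_trans. 2: apply Hd. apply Rmult_le_compat_l; auto. }
      assert (0 <= M / rho * t ^ (3 * n)).
      { apply Rmult_le_pos. apply Rdiv_le_0_compat; lra. apply pow_le; lra. }
      assert (0 <= Cmod (a (S n)) * Cmod z ^ n) by (apply Rmult_le_pos; auto; apply pow_le, Cmod_ge_0).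
      replace (M / rho * ((INR n + 1) ^ 2 * t ^ (3 * n))) with ((INR n + 1) * (INR n + 1) * (M / rho * t ^ (3 * n))) by ring.
      replace ((INR n + 1) * Cmod (a (S n)) * Cmod z ^ n) with ((INR n + 1) * (Cmod (a (S n)) * Cmod z ^ n)) by ring.
      apply Rle_trans with ((INR n + 1) * (M / rho * t ^ (3 * n))).
      apply Rmult_le_compat_l; lra.
      rewrite Rmult_assoc. apply Rmult_le_compat_l. lra. nra.
    - apply (@ex_series_scal R_AbsRing R_NormedModule (M / rho)). apply ex_series_n2; auto. }
  exact Hex.
Qed.

Lemma series_shift1 (u : nat -> C) (l : C) :
  is_series u l -> is_series (fun n => u (S n)) (l - u 0%nat)%C.
Proof.
  intros H. apply is_series_incr_1.
  match goal with |- is_series _ ?x => replace x with l end. exact H.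
  change plus with Cplus. ring.
Qed.

Lemma series_derive (a : nat -> C) (g : C -> C) :
  (forall z, unit_disk z -> is_series (fun n => (a n * z ^ n)%C) (g z)) ->
  forall z, unit_disk z -> forall pz, is_series (fun n => (dcoef a n * z ^ n)%C) pz ->
  is_derive (K := C_AbsRing) (V := C_NormedModule) g z pz.
Proof.
  intros Hs z Hz pz Hp. pose proof Hz as Hz'. unfold unit_disk in Hz.
  set (rho := (1 + Cmod z) / 2).
  assert (Hrho : 0 < rho < 1) by (unfold rho; pose proof (Cmod_ge_0 z); lra).
  destruct (coef_bound a g Hs rho Hrho) as [M [t [Ht [HM Hb]]]].
  pose proof (dcoef_bound a rho M t ltac:(lra) Ht HM Hb) as Hd.
  set (bK := fun n => Cmod (a (S n)) * (INR n ^ 2 * rho ^ n / rho)).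
  assert (HbK : ex_series bK).
  { apply (@ex_series_le R_AbsRing R_CompleteNormedModule _ (fun n => M / rho / rho * ((INR n + 1) ^ 2 * t ^ (3 * n)))).
    - intros n. change (norm (bK n)) with (Rabs (bK n)). unfold bK.
      assert (0 <= Cmod (a (S n))) by apply Cmod_ge_0.
      assert (Hn : 0 <= INR n) by apply pos_INR.
      assert (0 <= rho ^ n) by (apply pow_le; lra).
      rewrite Rabs_pos_eq.
      2:{ apply Rmult_le_pos; auto. apply Rmult_le_pos. apply Rmult_le_pos; auto. nra. left; apply Rinv_0_lt_compat; lra. }
      specialize (Hd n).
      assert (0 <= M / rho * t ^ (3 * n)).
      { apply Rmult_le_pos. apply Rdiv_le_0_compat; lra. apply pow_le; lra. }
      replace (Cmod (a (S n)) * (INR n ^ 2 * rho ^ n / rho)) with (INR n * INR n * (Cmod (a (S n)) * rho ^ n) / rho) by (field; lra).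
      replace (M / rho / rho * ((INR n + 1) ^ 2 * t ^ (3 * n))) with ((INR n + 1) * (INR n + 1) * (M / rho * t ^ (3 * n)) / rho) by (field; lra).
      apply Rmult_le_compat_r. left; apply Rinv_0_lt_compat; lra.
      apply Rmult_le_compat; try nra.
    - apply (@ex_series_scal R_AbsRing R_NormedModule (M / rho / rho)). apply ex_series_n2; auto. }
  set (K := Series bK).
  assert (HK : is_series bK K) by (apply Series_correct; auto).
  assert (HK0 : 0 <= K).
  { apply (is_lim_seq_le (fun _ => 0) (sum_n bK) 0 K). 2: apply is_lim_seq_const. 2: exact HK.
    intros n. induction n. rewrite sum_O. unfold bK. apply Rmult_le_pos. apply Cmod_ge_0.
    apply Rmult_le_pos. apply Rmult_le_pos. apply pow_le, pos_INR. apply pow_le; lra. left; apply Rinv_0_lt_compat; lra.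
    rewrite sum_Sn. change (plus (sum_n bK n) (bK (S n))) with (sum_n bK n + bK (S n)).
    assert (0 <= bK (S n)). { unfold bK. apply Rmult_le_pos. apply Cmod_ge_0.
    apply Rmult_le_pos. apply Rmult_le_pos. apply pow_le, pos_INR. apply pow_le; lra. left; apply Rinv_0_lt_compat; lra. }
    lra. }
  assert (Hest : forall w, Cmod (w - z) < (1 - Cmod z) / 2 ->
     Cmod (g w - g z - (w - z) * pz)%C <= K * Cmod (w - z) ^ 2).
  { intros w Hw.
    assert (Hwr : Cmod w <= rho).
    { replace w with ((w - z) + z)%C by ring. eapply Rle_trans. apply Cmod_triangle. unfold rho; lra. }
    assert (Hwd : unit_disk w) by (unfold unit_disk; lra).
    pose proof (series_shift1 _ _ (Hs w Hwd)) as A.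
    pose proof (series_shift1 _ _ (Hs z Hz')) as B.
    pose proof (@is_series_scal C_AbsRing C_NormedModule (w - z)%C _ _ Hp) as Cc.
    pose proof (is_series_minus _ _ _ _ (is_series_minus _ _ _ _ A B) Cc) as D.
    assert (D' : is_series (fun n => (a (S n) * Erem w z n)%C) (g w - g z - (w - z) * pz)%C).
    { eapply is_series_ext. 2: eapply (is_series_ext _ _ _ (fun n => eq_refl)) in D.
      2: { replace (g w - g z - (w - z) * pz)%C with
            (plus (plus (g w - a 0%nat * w ^ 0) (opp (g z - a 0%nat * z ^ 0))) (opp (scal (w - z)%C pz)))%C.
           exact D. change plus with Cplus. change opp with Copp. change scal with Cmult. simpl. ring. }
      intros n. simpl. unfold Erem, dcoef. change plus with Cplus. change opp with Copp. change scal with Cmult. simpl. ring. }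
    apply (series_Cmod_le (fun n => (a (S n) * Erem w z n)%C) (fun n => bK n * Cmod (w - z) ^ 2)).
    - exact D'.
    - apply (is_series_scal_r (Cmod (w - z) ^ 2) bK K). exact HK.
    - intros n. rewrite Cmod_mult. unfold bK.
      pose proof (Erem_bound w z rho n ltac:(lra) Hwr ltac:(unfold rho; lra)) as HE.
      assert (0 <= Cmod (a (S n))) by apply Cmod_ge_0.
      replace (Cmod (a (S n)) * (INR n ^ 2 * rho ^ n / rho) * Cmod (w - z) ^ 2) with
        (Cmod (a (S n)) * ((INR n ^ 2 * rho ^ n * Cmod (w - z) ^ 2) / rho)) by (field; lra).
      apply Rmult_le_compat_l; auto.
      apply Rmult_le_reg_l with rho. lra.
      replace (rho * (INR n ^ 2 * rho ^ n * Cmod (w - z) ^ 2 / rho)) with (INR n ^ 2 * rho ^ n * Cmod (w - z) ^ 2) by (field; lra).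
      exact HE. }
  unfold is_derive, filterdiff. split.
  - apply is_linear_scal_l.
  - intros x Hx. assert (Ezx : z = x) by exact (is_filter_lim_locally_unique _ _ Hx). subst x.
    intros eps.
    assert (Hdel : 0 < Rmin ((1 - Cmod z) / 2) (eps / (K + 1))).
    { apply Rmin_pos. lra. apply Rdiv_lt_0_compat. apply cond_pos. lra. }
    apply filter_imp with (@ball_norm C_AbsRing (AbsRing_NormedModule C_AbsRing) z (mkposreal _ Hdel)).
    2: apply (@locally_ball_norm C_AbsRing (AbsRing_NormedModule C_AbsRing)).
    intros y Hy. unfold ball_norm in Hy. simpl in Hy.
    change (norm (minus y z)) with (Cmod (y - z)%C) in Hy.
    change (norm (minus (minus (g y) (g z)) (scal (minus y z) pz))) with (Cmod (g y - g z - (y - z) * pz)%C).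
    change (norm (minus y z)) with (Cmod (y - z)%C).
    assert (H1 : Cmod (y - z) < (1 - Cmod z) / 2) by (eapply Rlt_le_trans; [exact Hy| apply Rmin_l]).
    assert (H2 : Cmod (y - z) < eps / (K + 1)) by (eapply Rlt_le_trans; [exact Hy| apply Rmin_r]).
    eapply Rle_trans. apply Hest; auto.
    assert (Hh : 0 <= Cmod (y - z)) by apply Cmod_ge_0.
    assert (K * Cmod (y - z) <= eps).
    { apply Rle_trans with (K * (eps / (K + 1))). apply Rmult_le_compat_l; lra.
      pose proof (cond_pos eps). apply Rmult_le_reg_r with (K + 1). lra.
      replace (K * (eps / (K + 1)) * (K + 1)) with (K * eps) by (field; lra). nra. }
    simpl. nra.
Qed.

Definition cis (x : R) : C := (cos x, sin x).

Lemma cis_mult x y : (cis x * cis y)%C = cis (x + y).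
Proof. unfold cis, Cmult. simpl. rewrite cos_plus, sin_plus. f_equal; ring. Qed.

Lemma cis_pow x n : (cis x ^ n)%C = cis (INR n * x).
Proof.
  induction n.
  - simpl. unfold cis. rewrite Rmult_0_l, cos_0, sin_0. reflexivity.
  - simpl Cpow. rewrite IHn, cis_mult. f_equal. rewrite S_INR. ring.
Qed.

Lemma cis_conj_mult x : (cis x * Cconj (cis x))%C = 1%C.
Proof.
  unfold cis, Cconj, Cmult. simpl.
  assert (H := sin2_cos2 x). unfold Rsqr in H.
  apply injective_projections; simpl; lra.
Qed.

Lemma Cpow_mul (x : C) a b : (x ^ (a * b))%C = ((x ^ a) ^ b)%C.
Proof.
  induction b.
  - rewrite Nat.mul_0_r. reflexivity.
  - replace (a * S b)%nat with (a + a * b)%nat by lia. rewrite Cpow_add_r, IHb. reflexivity.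
Qed.

Definition omega (K : nat) : C := cis (2 * PI / INR (S K)).

Lemma omega_pow K d : (omega K ^ d)%C = cis (2 * PI * INR d / INR (S K)).
Proof. unfold omega. rewrite cis_pow. f_equal. field. apply not_0_INR. lia. Qed.

Lemma omega_N K : (omega K ^ (S K))%C = 1%C.
Proof.
  rewrite omega_pow. replace (2 * PI * INR (S K) / INR (S K)) with (2 * PI).
  unfold cis. rewrite cos_2PI, sin_2PI. reflexivity.
  field. apply not_0_INR. lia.
Qed.

Lemma omega_ne1 K d : (0 < d < S K)%nat -> (omega K ^ d)%C <> 1%C.
Proof.
  intros Hd. rewrite omega_pow. unfold cis. intros E.
  assert (Hc : cos (2 * PI * INR d / INR (S K)) = 1) by (apply (f_equal fst) in E; exact E).
  assert (Hs : sin (2 * PI * INR d / INR (S K)) = 0) by (apply (f_equal snd) in E; exact E).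
  set (x := 2 * PI * INR d / INR (S K)) in *.
  assert (HN : 0 < INR (S K)) by (apply lt_0_INR; lia).
  assert (Hdp : 0 < INR d) by (apply lt_0_INR; lia).
  assert (HdN : INR d < INR (S K)) by (apply lt_INR; lia).
  assert (Hx0 : 0 < x) by (unfold x; apply Rdiv_lt_0_compat; [pose proof PI_RGT_0; nra| lra]).
  assert (Hx1 : x < 2 * PI).
  { unfold x. apply Rmult_lt_reg_r with (INR (S K)); auto. unfold Rdiv. rewrite Rmult_assoc, Rinv_l by lra.
    pose proof PI_RGT_0. nra. }
  destruct (Rtotal_order x PI) as [H|[H|H]].
  - pose proof (sin_gt_0 x Hx0 H). lra.
  - rewrite H, cos_PI in Hc. lra.
  - pose proof (sin_lt_0 x H Hx1). lra.
Qed.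

Lemma geom_sum (q : C) K : ((q - 1) * sum_n (fun k => q ^ k) K)%C = (q ^ (S K) - 1)%C.
Proof.
  induction K.
  - rewrite sum_O. simpl. ring.
  - rewrite sum_Sn. change plus with Cplus. rewrite Cmult_plus_distr_l, IHK. simpl. ring.
Qed.

Lemma Cmult_reg0 (q s : C) : q <> RtoC 0 -> (q * s)%C = RtoC 0 -> s = RtoC 0.
Proof.
  intros Hq H. replace s with (/ q * (q * s))%C. rewrite H. ring.
  rewrite Cmult_assoc, Cinv_l; auto. ring.
Qed.

Lemma root_sum K d : (0 < d < S K)%nat -> sum_n (fun k => (omega K ^ d) ^ k)%C K = RtoC 0.
Proof.
  intros Hd. pose proof (geom_sum (omega K ^ d) K) as G.
  rewrite <- Cpow_mul, Nat.mul_comm, Cpow_mul, omega_N, Cpow_1_l in G.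
  replace (1 - 1)%C with (RtoC 0) in G by ring.
  assert (Hne : (omega K ^ d - 1)%C <> RtoC 0).
  { intros E. apply (omega_ne1 K d Hd). replace (omega K ^ d)%C with ((omega K ^ d - 1) + 1)%C by ring.
    rewrite E. ring. }
  apply (Cmult_reg0 _ _ Hne G).
Qed.

Lemma sum_n_const1 K : sum_n (fun _ : nat => RtoC 1) K = RtoC (INR (S K)).
Proof.
  induction K. rewrite sum_O. reflexivity.
  rewrite sum_Sn, IHK. change plus with Cplus. rewrite (S_INR (S K)), RtoC_plus. reflexivity.
Qed.

Lemma sum_n_conj (u : nat -> C) K : sum_n (fun k => Cconj (u k)) K = Cconj (sum_n u K).
Proof.
  induction K. rewrite !sum_O. reflexivity.
  rewrite !sum_Sn, IHK. change plus with Cplus. rewrite Cplus_conj. reflexivity.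
Qed.

Lemma omegak_conj K k : (omega K ^ k * Cconj (omega K ^ k))%C = 1%C.
Proof. rewrite omega_pow. apply cis_conj_mult. Qed.


Lemma Cpow_mult_distr (x y : C) n : ((x * y) ^ n)%C = (x ^ n * y ^ n)%C.
Proof. induction n; simpl. ring. rewrite IHn. ring. Qed.

Lemma avg_ge K m l : (l <= m)%nat -> (m < S K)%nat ->
  sum_n (fun k => ((omega K ^ k) ^ m * Cconj (omega K ^ k) ^ l)%C) K =
  if (m =? l)%nat then RtoC (INR (S K)) else RtoC 0.
Proof.
  intros Hlm HmN.
  rewrite (sum_n_ext _ (fun k => (omega K ^ (m - l)) ^ k)%C).
  2:{ intros k. replace m with ((m - l) + l)%nat at 1 by lia. rewrite Cpow_add_r.
      rewrite <- Cmult_assoc, <- Cpow_mult_distr, omegak_conj, Cpow_1_l, Cmult_1_r.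
      rewrite <- !Cpow_mul, Nat.mul_comm. reflexivity. }
  destruct (Nat.eqb_spec m l) as [E|E].
  - subst. rewrite Nat.sub_diag. rewrite (sum_n_ext _ (fun _ => RtoC 1)). apply sum_n_const1.
    intros k. apply Cpow_1_l.
  - apply root_sum. lia.
Qed.

Lemma avg_mono K m l : (m < S K)%nat -> (l < S K)%nat ->
  sum_n (fun k => ((omega K ^ k) ^ m * Cconj (omega K ^ k) ^ l)%C) K =
  if (m =? l)%nat then RtoC (INR (S K)) else RtoC 0.
Proof.
  intros Hm Hl. destruct (Compare_dec.le_lt_dec l m) as [H|H].
  - apply avg_ge; auto.
  - rewrite (sum_n_ext _ (fun k => Cconj ((omega K ^ k) ^ l * Cconj (omega K ^ k) ^ m))%C).
    2:{ intros k. rewrite Cmult_conj, !Cpow_conj, Cconj_conj. apply Cmult_comm. }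
    rewrite sum_n_conj, avg_ge by lia.
    rewrite (Nat.eqb_sym l m). destruct (Nat.eqb m l); unfold Cconj, RtoC; apply injective_projections; simpl; lra.
Qed.

Ltac cring := match goal with |- ?a = ?b => change (@eq C a b) end; ring.

Lemma sum_n_Cplus (u v : nat -> C) n : sum_n (fun k => (u k + v k)%C) n = (sum_n u n + sum_n v n)%C.
Proof. apply (sum_n_plus u v n). Qed.

Lemma sum_n_Cmult_l (a : C) (u : nat -> C) n : sum_n (fun k => (a * u k)%C) n = (a * sum_n u n)%C.
Proof. apply (@sum_n_mult_l C_Ring a u n). Qed.

Lemma sum_n_Cmult_r (a : C) (u : nat -> C) n : sum_n (fun k => (u k * a)%C) n = (sum_n u n * a)%C.
Proof. apply (@sum_n_mult_r C_Ring a u n). Qed.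

Definition Avg (K : nat) (F : C -> C) : C := sum_n (fun k => F (omega K ^ k)%C) K.

Lemma Avg_plus K (F G : C -> C) : Avg K (fun x => (F x + G x)%C) = (Avg K F + Avg K G)%C.
Proof. unfold Avg. apply sum_n_Cplus. Qed.

Lemma Avg_scal K (c : C) (F : C -> C) : Avg K (fun x => (c * F x)%C) = (c * Avg K F)%C.
Proof. unfold Avg. apply sum_n_Cmult_l. Qed.

Lemma Avg_ext K (F G : C -> C) : (forall x, F x = G x) -> Avg K F = Avg K G.
Proof. intros H. unfold Avg. apply sum_n_ext. intros; apply H. Qed.

Definition Pm (d : nat -> C) (m : nat) (z : C) : C := sum_n (fun n => (d n * z ^ n)%C) m.

Lemma sum_ind (x : nat -> C) c m : (c <= m)%nat ->
  sum_n (fun n => if (n =? c)%nat then x n else RtoC 0) m = x c.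
Proof.
  intros Hc. induction m.
  - rewrite sum_O. assert (c = 0%nat) by lia. subst. reflexivity.
  - rewrite sum_Sn. change plus with Cplus. destruct (Nat.eq_dec c (S m)).
    + subst. rewrite Nat.eqb_refl.
      rewrite (sum_n_ext_loc _ (fun _ => RtoC 0)).
      2:{ intros n Hn. destruct (Nat.eqb_spec n (S m)). lia. reflexivity. }
      assert (Z : forall k, sum_n (fun _ => RtoC 0) k = RtoC 0).
      { induction k. rewrite sum_O. reflexivity. rewrite sum_Sn, IHk. change plus with Cplus. cring. }
      rewrite Z. cring.
    + rewrite IHm by lia. destruct (Nat.eqb_spec (S m) c). lia. cring.
Qed.

Lemma sum_zero (x : nat -> C) (P : nat -> bool) m : (forall n, P n = false) ->
  sum_n (fun n => if P n then x n else RtoC 0) m = RtoC 0.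
Proof.
  intros HP. induction m.
  - rewrite sum_O, HP. reflexivity.
  - rewrite sum_Sn, IHm, HP. change plus with Cplus. cring.
Qed.

Lemma avg_P (d : nat -> C) (r : R) K m j l : (m + j < S K)%nat -> (l < S K)%nat ->
  Avg K (fun x => (Pm d m (RtoC r * x) * x ^ j * Cconj x ^ l)%C) =
  (RtoC (INR (S K)) * sum_n (fun n => if (n + j =? l)%nat then (d n * RtoC r ^ n)%C else RtoC 0) m)%C.
Proof.
  intros H1 H2. unfold Avg, Pm.
  rewrite (sum_n_ext _ (fun k => sum_n (fun n => (d n * RtoC r ^ n) * (((omega K ^ k) ^ (n + j)) * Cconj (omega K ^ k) ^ l))%C m)).
  2:{ intros k. rewrite <- sum_n_Cmult_r, <- sum_n_Cmult_r. apply sum_n_ext. intros n.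
      rewrite Cpow_mult_distr, Cpow_add_r. cring. }
  rewrite (sum_n_switch (G:=C_AbelianMonoid) (fun k n => (d n * RtoC r ^ n * ((omega K ^ k) ^ (n + j) * Cconj (omega K ^ k) ^ l))%C) K m).
  rewrite <- sum_n_Cmult_l. apply sum_n_ext_loc. intros n Hn.
  rewrite sum_n_Cmult_l, avg_mono by lia.
  destruct (n + j =? l)%nat; cring.
Qed.

Lemma S_eval (d : nat -> C) (r : R) m j l : (j <= l)%nat -> (l - j <= m)%nat ->
  sum_n (fun n => if (n + j =? l)%nat then (d n * RtoC r ^ n)%C else RtoC 0) m = (d (l - j)%nat * RtoC r ^ (l - j))%C.
Proof.
  intros H1 H2.
  rewrite (sum_n_ext _ (fun n => if (n =? l - j)%nat then (d n * RtoC r ^ n)%C else RtoC 0)).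
  apply (sum_ind (fun n => (d n * RtoC r ^ n)%C)); auto.
  intros n. destruct (Nat.eqb_spec (n + j) l), (Nat.eqb_spec n (l - j)); auto; lia.
Qed.

Lemma S_zero (d : nat -> C) (r : R) m j l : (l < j)%nat ->
  sum_n (fun n => if (n + j =? l)%nat then (d n * RtoC r ^ n)%C else RtoC 0) m = RtoC 0.
Proof.
  intros H. apply (sum_zero (fun n => (d n * RtoC r ^ n)%C) (fun n => (n + j =? l)%nat)).
  intros n. apply Nat.eqb_neq. lia.
Qed.

Definition Qf (u0 u1 u2 : C) (x : C) : C := (u0 + u1 * x + u2 * x ^ 2)%C.

Definition Xf (d : nat -> C) (r : R) (u0 u1 u2 : C) : C :=
  ((u0 * Cconj u0 + u1 * Cconj u1 + u2 * Cconj u2) * d 0%nat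
   + (u0 * Cconj u1 + u1 * Cconj u2) * (d 1%nat * RtoC r)
   + u0 * Cconj u2 * (d 2%nat * RtoC r ^ 2))%C.

Lemma avg_quad (d : nat -> C) (r : R) K m u0 u1 u2 : (2 <= m)%nat -> (m + 2 < S K)%nat ->
  Avg K (fun x => (Pm d m (RtoC r * x) * Qf u0 u1 u2 x * Cconj (Qf u0 u1 u2 x))%C) =
  (RtoC (INR (S K)) * Xf d r u0 u1 u2)%C.
Proof.
  intros Hm HK.
  set (P := fun x => Pm d m (RtoC r * x)).
  rewrite (Avg_ext K _ (fun x =>
     (u0 * Cconj u0) * (P x * x ^ 0 * Cconj x ^ 0)
   + (u0 * Cconj u1) * (P x * x ^ 0 * Cconj x ^ 1)
   + (u0 * Cconj u2) * (P x * x ^ 0 * Cconj x ^ 2)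
   + (u1 * Cconj u0) * (P x * x ^ 1 * Cconj x ^ 0)
   + (u1 * Cconj u1) * (P x * x ^ 1 * Cconj x ^ 1)
   + (u1 * Cconj u2) * (P x * x ^ 1 * Cconj x ^ 2)
   + (u2 * Cconj u0) * (P x * x ^ 2 * Cconj x ^ 0)
   + (u2 * Cconj u1) * (P x * x ^ 2 * Cconj x ^ 1)
   + (u2 * Cconj u2) * (P x * x ^ 2 * Cconj x ^ 2))%C).
  2:{ intros x. unfold Qf. rewrite !Cplus_conj, !Cmult_conj, !Cpow_conj. fold (P x). ring. }
  rewrite !Avg_plus, !Avg_scal. unfold P.
  rewrite !avg_P by lia.
  rewrite (S_eval d r m 0 0), (S_eval d r m 0 1), (S_eval d r m 0 2), (S_zero d r m 1 0),
    (S_eval d r m 1 1), (S_eval d r m 1 2), (S_zero d r m 2 0), (S_zero d r m 2 1), (S_eval d r m 2 2) by lia.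
  unfold Xf. simpl. ring.
Qed.

Definition PS (u : nat -> C) : C := epsilon (inhabits (RtoC 0)) (fun l : C => is_series u l).
Lemma PS_correct u l : is_series u l -> PS u = l.
Proof. intros H. unfold PS.
  assert (H1 : is_series u (epsilon (inhabits (RtoC 0)) (fun l : C => is_series u l))).
  { apply epsilon_spec. exists l. exact H. }
  exact (filterlim_locally_unique (K:=C_AbsRing) (V:=C_NormedModule) _ _ _ H1 H). Qed.

Definition psum (a : nat -> C) (z : C) : C := PS (fun n => (dcoef a n * z ^ n)%C).

Lemma psum_pos f a z : in_class_R f a -> unit_disk z ->
  is_series (fun n => (dcoef a n * z ^ n)%C) (psum a z) /\ 0 < Re (psum a z).
Proof.
  intros [[H0 [H1 Hs]] Hb] Hz.
  destruct (dser_exists a f Hs z Hz) as [pz Hpz].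
  unfold psum. rewrite (PS_correct _ _ Hpz). split; auto.
  pose proof (series_derive a f Hs z Hz pz Hpz) as Hd.
  destruct (Hb z Hz) as [l [Hl Hre]].
  apply is_C_derive_unique in Hd. apply is_C_derive_unique in Hl. congruence.
Qed.

Lemma dabs_ex (a : nat -> C) (g : C -> C) :
  (forall z, unit_disk z -> is_series (fun n => (a n * z ^ n)%C) (g z)) ->
  forall r, 0 <= r < 1 -> ex_series (fun n => Cmod (dcoef a n) * r ^ n).
Proof.
  intros Hs r Hr.
  set (rho := (1 + r) / 2).
  assert (Hrho : 0 < rho < 1) by (unfold rho; lra).
  destruct (coef_bound a g Hs rho Hrho) as [M [t [Ht [HM Hb]]]].
  pose proof (dcoef_bound a rho M t ltac:(lra) Ht HM Hb) as Hd.
  apply (@ex_series_le R_AbsRing R_CompleteNormedModule _ (fun n => M / rho * ((INR n + 1) ^ 2 * t ^ (3 * n)))).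
  - intros n. change (norm (Cmod (dcoef a n) * r ^ n)) with (Rabs (Cmod (dcoef a n) * r ^ n)).
    rewrite Rabs_pos_eq. 2:{ apply Rmult_le_pos. apply Cmod_ge_0. apply pow_le; lra. }
    unfold dcoef. rewrite !Cmod_mult, Cmod_R, Rabs_pos_eq by apply pos_INR.
    rewrite S_INR.
    assert (Hzn : r ^ n <= rho ^ n) by (apply pow_incr; unfold rho; lra).
    assert (0 <= Cmod (a (S n))) by apply Cmod_ge_0.
    assert (Hn : 0 <= INR n) by apply pos_INR.
    assert (H1 : Cmod (a (S n)) * r ^ n <= M / rho * t ^ (3 * n)).
    { eapply Rle_trans. 2: apply Hd. apply Rmult_le_compat_l; auto. }
    assert (0 <= M / rho * t ^ (3 * n)).
    { apply Rmult_le_pos. apply Rdiv_le_0_compat; lra. apply pow_le; lra. }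
    assert (0 <= Cmod (a (S n)) * r ^ n) by (apply Rmult_le_pos; auto; apply pow_le; lra).
    replace (M / rho * ((INR n + 1) ^ 2 * t ^ (3 * n))) with ((INR n + 1) * (INR n + 1) * (M / rho * t ^ (3 * n))) by ring.
    replace ((INR n + 1) * Cmod (a (S n)) * r ^ n) with ((INR n + 1) * (Cmod (a (S n)) * r ^ n)) by ring.
    apply Rle_trans with ((INR n + 1) * (M / rho * t ^ (3 * n))).
    apply Rmult_le_compat_l; lra.
    rewrite Rmult_assoc. apply Rmult_le_compat_l. lra. nra.
  - apply (@ex_series_scal R_AbsRing R_NormedModule (M / rho)). apply ex_series_n2; auto.
Qed.

Lemma tail_bound (d : nat -> C) (r : R) (z pz : C) m :
  0 <= r -> Cmod z = r ->
  ex_series (fun n => Cmod (d n) * r ^ n) ->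
  is_series (fun n => (d n * z ^ n)%C) pz ->
  Cmod (pz - Pm d m z) <= Series (fun n => Cmod (d n) * r ^ n) - sum_n (fun n => Cmod (d n) * r ^ n) m.
Proof.
  intros Hr Hz Hex Hp.
  set (b := fun n => Cmod (d n) * r ^ n).
  assert (Hb : is_series b (Series b)) by (apply Series_correct; auto).
  apply (series_Cmod_le (fun k => (d (S m + k)%nat * z ^ (S m + k))%C) (fun k => b (S m + k)%nat)).
  - apply (is_series_incr_n (fun n => (d n * z ^ n)%C) (S m)). lia.
    match goal with |- is_series _ ?x => replace x with pz end. exact Hp.
    unfold Pm. change (Init.Nat.pred (S m)) with m. change plus with Cplus. match goal with |- _ = (_ - ?s + ?t)%C => replace t with s by reflexivity end. generalize (sum_n (fun n : nat => (d n * z ^ n)%C) m). intros s. cring.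
  - apply (is_series_incr_n b (S m)). lia.
    match goal with |- is_series _ ?x => replace x with (Series b) end. exact Hb.
    change plus with Rplus. match goal with |- _ = (_ - ?s + ?t) => replace t with s by reflexivity end. simpl. lra.
  - intros n. unfold b. rewrite Cmod_mult, Cmod_pow, Hz. lra.
Qed.

Lemma Cmod_cis x : Cmod (cis x) = 1.
Proof.
  unfold Cmod, cis. simpl. rewrite Rmult_1_r, Rmult_1_r.
  pose proof (sin2_cos2 x) as H. unfold Rsqr in H. rewrite Rplus_comm, H. apply sqrt_1.
Qed.

Lemma Cmod_omega K k : Cmod (omega K ^ k)%C = 1.
Proof. rewrite omega_pow. apply Cmod_cis. Qed.

Lemma Re_mult_conj (p q : C) : Re (p * q * Cconj q)%C = Re p * Cmod q ^ 2.
Proof.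
  rewrite Cmod2_alt. destruct p as [p1 p2], q as [q1 q2]. unfold Cmult, Cconj, Re. simpl. ring.
Qed.

Lemma sum_Re_nonneg (g : nat -> C) K : (forall k, 0 <= Re (g k)) -> 0 <= Re (sum_n g K).
Proof.
  intros H. induction K.
  - rewrite sum_O. auto.
  - rewrite sum_Sn. change plus with Cplus.
    assert (E : forall x y : C, Re (x + y)%C = Re x + Re y) by (intros [] []; reflexivity).
    rewrite E. specialize (H (S K)). lra.
Qed.

Lemma sum_Cmod_bound (g : nat -> C) K c : (forall k, Cmod (g k) <= c) -> Cmod (sum_n g K) <= INR (S K) * c.
Proof.
  intros H. induction K.
  - rewrite sum_O. simpl. rewrite Rmult_1_l. auto.
  - rewrite sum_Sn. change plus with Cplus. eapply Rle_trans. apply Cmod_triangle.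
    rewrite (S_INR (S K)). specialize (H (S K)). lra.
Qed.

Lemma Cmod_Qf u0 u1 u2 x : Cmod x = 1 -> Cmod (Qf u0 u1 u2 x) <= Cmod u0 + Cmod u1 + Cmod u2.
Proof.
  intros Hx. unfold Qf. eapply Rle_trans. apply Cmod_triangle. eapply Rle_trans.
  apply Rplus_le_compat_r. apply Cmod_triangle.
  rewrite !Cmod_mult, Cmod_pow, Hx. simpl. lra.
Qed.

Lemma quad_nonneg f a r u0 u1 u2 : in_class_R f a -> 0 <= r < 1 ->
  0 <= Re (Xf (dcoef a) r u0 u1 u2).
Proof.
  intros Hc Hr. pose proof Hc as [[H0 [H1 Hs]] Hb].
  set (d := dcoef a).
  set (b := fun n => Cmod (d n) * r ^ n).
  assert (Hex : ex_series b) by (apply (dabs_ex a f Hs r Hr)).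
  set (Sb := Series b).
  assert (HSb : is_series b Sb) by (apply Series_correct; auto).
  set (B := (Cmod u0 + Cmod u1 + Cmod u2) ^ 2).
  assert (HB : 0 <= B) by (unfold B; apply pow2_ge_0).
  set (X := Re (Xf d r u0 u1 u2)).
  assert (Hclaim : forall m, (2 <= m)%nat -> - ((Sb - sum_n b m) * B) <= X).
  { intros m Hm. set (K := (m + 2)%nat).
    set (N := INR (S K)).
    assert (HN : 0 < N) by (unfold N; apply lt_0_INR; lia).
    set (F := fun x => (psum a (RtoC r * x) * Qf u0 u1 u2 x * Cconj (Qf u0 u1 u2 x))%C).
    assert (Hpos : 0 <= Re (Avg K F)).
    { unfold Avg. apply sum_Re_nonneg. intros k. unfold F. rewrite Re_mult_conj.
      apply Rmult_le_pos. 2: apply pow2_ge_0.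
      assert (Hz : unit_disk (RtoC r * omega K ^ k)%C).
      { unfold unit_disk. rewrite Cmod_mult, Cmod_omega, Cmod_R, Rabs_pos_eq; lra. }
      left. apply (psum_pos f a _ Hc Hz). }
    assert (Hsplit : Avg K F = (Avg K (fun x => (Pm d m (RtoC r * x) * Qf u0 u1 u2 x * Cconj (Qf u0 u1 u2 x))%C)
        + Avg K (fun x => ((psum a (RtoC r * x) - Pm d m (RtoC r * x)) * (Qf u0 u1 u2 x * Cconj (Qf u0 u1 u2 x)))%C))%C).
    { rewrite <- Avg_plus. apply Avg_ext. intros x. unfold F. ring. }
    rewrite avg_quad in Hsplit by lia.
    set (E := Avg K (fun x => ((psum a (RtoC r * x) - Pm d m (RtoC r * x)) * (Qf u0 u1 u2 x * Cconj (Qf u0 u1 u2 x)))%C)) in Hsplit.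
    assert (HE : Cmod E <= N * ((Sb - sum_n b m) * B)).
    { unfold E, Avg. apply sum_Cmod_bound. intros k. cbv beta.
      rewrite Cmod_mult, Cmod_mult, Cmod_conj.
      assert (Hz1 : Cmod (RtoC r * omega K ^ k)%C = r).
      { rewrite Cmod_mult, Cmod_omega, Cmod_R, Rabs_pos_eq; lra. }
      assert (Hzd : unit_disk (RtoC r * omega K ^ k)%C) by (unfold unit_disk; lra).
      pose proof (tail_bound d r _ _ m ltac:(lra) Hz1 Hex (proj1 (psum_pos f a _ Hc Hzd))) as T.
      fold b in T. fold Sb in T.
      pose proof (Cmod_Qf u0 u1 u2 _ (Cmod_omega K k)) as HQ.
      assert (0 <= Cmod (Qf u0 u1 u2 (omega K ^ k))) by apply Cmod_ge_0.
      assert (HQ2 : Cmod (Qf u0 u1 u2 (omega K ^ k)) * Cmod (Qf u0 u1 u2 (omega K ^ k)) <= B).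
      { unfold B. simpl. rewrite Rmult_1_r. apply Rmult_le_compat; auto. }
      apply Rmult_le_compat; auto. apply Cmod_ge_0. apply Rmult_le_pos; apply Cmod_ge_0. }
    assert (HRe : Re (Avg K F) = N * X + Re E).
    { rewrite Hsplit. unfold X, N. destruct (Xf d r u0 u1 u2) as [x1 x2]. destruct E as [e1 e2].
      unfold Cplus, Cmult, RtoC, Re. simpl. ring. }
    pose proof (re_le_Cmod E) as HreE. apply Rabs_le_between in HreE.
    assert (0 <= N * X + N * ((Sb - sum_n b m) * B)) by lra.
    assert (0 <= X + (Sb - sum_n b m) * B).
    { apply Rmult_le_reg_l with N; auto. lra. }
    lra. }
  assert (Hlim : is_lim_seq (fun m => - ((Sb - sum_n b m) * B)) 0).
  { apply is_lim_seq_ext with (fun m => (sum_n b m - Sb) * B). intros; ring.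
    replace (Finite 0) with (Rbar_mult (Finite (Sb - Sb)) B).
    apply is_lim_seq_scal_r. apply is_lim_seq_minus'. exact HSb. apply is_lim_seq_const.
    simpl. f_equal. ring. }
  assert (Hle := is_lim_seq_le_loc (fun m => - ((Sb - sum_n b m) * B)) (fun _ => X) 0 X).
  simpl in Hle. apply Hle.
  - exists 2%nat. intros n Hn. apply Hclaim. lia.
  - exact Hlim.
  - apply is_lim_seq_const.
Qed.

Lemma Xf_special (d : nat -> C) (r : R) (lam : C) :
  d 0%nat = RtoC 1 ->
  Re (Xf d r (RtoC 1) ((Cconj (lam * d 1%nat * RtoC r) - d 1%nat * RtoC r) * RtoC (/ 2)) (- Cconj lam)%C) =
  1 + (Re lam ^ 2 + Im lam ^ 2)
  - r ^ 2 * Re (lam * d 2%nat)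
  - (r ^ 2 * (Re (d 1%nat) ^ 2 + Im (d 1%nat) ^ 2) * (1 + (Re lam ^ 2 + Im lam ^ 2))
     - 2 * r ^ 2 * Re (lam * (d 1%nat * d 1%nat))) / 4.
Proof.
  intros H0. unfold Xf. rewrite H0.
  destruct (d 1%nat) as [x y], (d 2%nat) as [p q], lam as [l1 l2].
  unfold Cmult, Cplus, Cminus, Copp, Cconj, RtoC, Re, Im. simpl. field.
Qed.

Lemma carath f a : in_class_R f a ->
  Cmod (dcoef a 2 - dcoef a 1 * dcoef a 1 * RtoC (/ 2))%C + Cmod (dcoef a 1) ^ 2 / 2 <= 2.
Proof.
  intros Hc. pose proof Hc as [[H0 [H1 Hs]] Hb].
  set (d := dcoef a).
  assert (Hd0 : d 0%nat = RtoC 1). { unfold d, dcoef. rewrite H1. simpl. unfold RtoC, Cmult. simpl. f_equal; ring. }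
  set (D := (d 2%nat - d 1%nat * d 1%nat * RtoC (/ 2))%C).
  assert (Hlam : exists lam : C, Re lam ^ 2 + Im lam ^ 2 = 1 /\ Re (lam * D)%C = Cmod D).
  { destruct (Req_dec (Cmod D) 0) as [HD|HD].
    - exists (RtoC 1). split. simpl. ring. rewrite HD. apply Cmod_eq_0 in HD. rewrite HD. simpl. ring.
    - exists (Cconj D * RtoC (/ Cmod D))%C.
      assert (HDp : 0 < Cmod D) by (pose proof (Cmod_ge_0 D); lra).
      split.
      + rewrite <- Cmod2_alt. rewrite Cmod_mult, Cmod_conj, Cmod_R, Rabs_pos_eq.
        field. lra. left. apply Rinv_0_lt_compat. lra.
      + replace (Cconj D * RtoC (/ Cmod D) * D)%C with (D * Cconj D * RtoC (/ Cmod D))%C by ring.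
        rewrite <- Cmod2_conj. rewrite <- RtoC_mult. simpl. field. lra. }
  destruct Hlam as [lam [Hl1 Hl2]].
  set (W := Cmod D + Cmod (d 1%nat) ^ 2 / 2).
  assert (Hr : forall r, 0 <= r < 1 -> r ^ 2 * W <= 2).
  { intros r Hr. pose proof (quad_nonneg f a r (RtoC 1) ((Cconj (lam * d 1%nat * RtoC r) - d 1%nat * RtoC r) * RtoC (/ 2))%C (- Cconj lam)%C Hc Hr) as Q.
    fold d in Q. rewrite Xf_special in Q by auto. rewrite Hl1 in Q.
    assert (E : Re (lam * d 2%nat)%C = Re (lam * D)%C + Re (lam * (d 1%nat * d 1%nat))%C / 2).
    { unfold D. destruct lam, (d 1%nat), (d 2%nat). unfold Cmult, Cminus, Cplus, Copp, RtoC, Re. simpl. field. }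
    rewrite E, Hl2 in Q. unfold W. rewrite Cmod2_alt. nra. }
  unfold W in *. rewrite Cmod2_alt in *.
  assert (HW0 : 0 <= Cmod D + (Re (d 1%nat) ^ 2 + Im (d 1%nat) ^ 2) / 2).
  { pose proof (Cmod_ge_0 D). pose proof (pow2_ge_0 (Re (d 1%nat))). pose proof (pow2_ge_0 (Im (d 1%nat))). lra. }
  set (V := Cmod D + (Re (d 1%nat) ^ 2 + Im (d 1%nat) ^ 2) / 2) in *.
  destruct (Rle_dec V 2) as [HV|HV]; auto.
  exfalso. set (e := (V - 2) / (4 * V)).
  assert (He : 0 < e < 1/4).
  { unfold e. split. apply Rdiv_lt_0_compat; lra.
    apply Rmult_lt_reg_r with (4 * V). lra. unfold Rdiv. rewrite Rmult_assoc, Rinv_l by lra. lra. }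
  specialize (Hr (1 - e) ltac:(lra)).
  assert (Hsq : (1 - e) ^ 2 >= 1 - 2 * e) by nra.
  assert (HeV : 2 * e * V = (V - 2) / 2) by (unfold e; field; lra).
  nra.
Qed.

Lemma final_real (x dl s : R) : 0 <= x -> 0 <= dl -> dl + x ^ 2 / 2 <= 2 -> s * s = 5 -> 0 < s ->
  forall g2, g2 <= dl / 6 + x ^ 2 / 48 -> x ^ 2 / 48 - dl / 6 <= g2 -> 0 <= g2 ->
  - (1 / s) <= g2 - x / 4 /\ g2 - x / 4 <= 1 / 3.
Proof.
  intros Hx Hd Hc Hs Hs0 g2 U L P. split.
  - assert (Hs2 : 2 < s) by nra.
    assert (Hx2 : x <= 2) by nra.
    destruct (Rle_dec x (4 / s)) as [H|H].
    + assert (1 / s = (4 / s) / 4) by (field; lra). lra.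
    + assert (H' : 4 <= x * s). { apply Rnot_le_lt in H.
        assert (E : 4 = (4 / s) * s) by (field; lra). rewrite E. apply Rmult_le_compat_r; lra. }
      assert (K : 0 <= (x * s - 4) * (5 * x * s + 20 - 12 * s)).
      { apply Rmult_le_pos. lra. nra. }
      assert (g2 >= (5 * x ^ 2 - 16) / 48) by lra.
      assert (E : (x * s - 4) * (5 * x * s + 20 - 12 * s) = 5 * x ^ 2 * (s * s) - 12 * x * (s * s) - 80 + 48 * s) by ring.
      rewrite Hs in E.
      assert (0 <= s * (5 * x ^ 2 - 16) - 12 * x * s + 48).
      { apply Rmult_le_reg_l with s. lra. rewrite Rmult_0_r.
        replace (s * (s * (5 * x ^ 2 - 16) - 12 * x * s + 48)) with (5 * x ^ 2 * (s * s) - 16 * (s * s) - 12 * x * (s * s) + 48 * s) by ring.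
        rewrite Hs. lra. }
      assert (E2 : - (1 / s) = - 48 / (48 * s)) by (field; lra).
      rewrite E2. apply Rmult_le_reg_r with (48 * s). lra.
      replace (-48 / (48 * s) * (48 * s)) with (-48) by (field; lra).
      nra.
  - nra.
Qed.

Lemma Cmod_R2 : Cmod (RtoC 2) = 2.
Proof. rewrite Cmod_R. apply Rabs_pos_eq. lra. Qed.

Lemma part1 f a : in_class_R f a -> - (1 / sqrt 5) <= logcoef_diff a /\ logcoef_diff a <= 1 / 3.
Proof.
  intros Hc. pose proof (carath f a Hc) as HC.
  set (c1 := dcoef a 1) in *. set (c2 := dcoef a 2) in *.
  set (D := (c2 - c1 * c1 * RtoC (/ 2))%C) in *.
  assert (Hc1 : c1 = (RtoC 2 * a 2%nat)%C).
  { unfold c1, dcoef. replace (INR 2) with 2 by (simpl; ring). reflexivity. }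
  assert (Hc2 : c2 = (RtoC 3 * a 3%nat)%C).
  { unfold c2, dcoef. replace (INR 3) with 3 by (simpl; ring). reflexivity. }
  assert (G1 : Cmod (gamma1 a) = Cmod c1 / 4).
  { unfold gamma1. rewrite Hc1, !Cmod_mult, Cmod_inv, Cmod_R2. field.
    intros E. apply (f_equal fst) in E. simpl in E. lra. }
  assert (G2 : gamma2 a = (D * RtoC (/ 6) + c1 * c1 * RtoC (/ 48))%C).
  { unfold gamma2, D. rewrite Hc1, Hc2. destruct (a 2%nat) as [x y], (a 3%nat) as [p q].
    unfold Cmult, Cplus, Cminus, Copp, Cinv, RtoC. simpl. apply injective_projections; simpl; field. }
  unfold logcoef_diff. rewrite G1.
  assert (HD0 := Cmod_ge_0 D). assert (Hx0 := Cmod_ge_0 c1).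
  assert (H6 : Cmod (D * RtoC (/ 6))%C = Cmod D / 6).
  { rewrite Cmod_mult, Cmod_R, Rabs_pos_eq. reflexivity. lra. }
  assert (H48 : Cmod (c1 * c1 * RtoC (/ 48))%C = Cmod c1 ^ 2 / 48).
  { rewrite !Cmod_mult, Cmod_R, Rabs_pos_eq. simpl. field. lra. }
  assert (sqrt 5 * sqrt 5 = 5) by (apply sqrt_sqrt; lra).
  assert (0 < sqrt 5) by (apply sqrt_lt_R0; lra).
  replace (Cmod c1 / 4) with (Cmod c1 / 4) by reflexivity.
  apply (final_real (Cmod c1) (Cmod D) (sqrt 5)); auto.
  - rewrite G2. eapply Rle_trans. apply Cmod_triangle. lra.
  - assert (E : (c1 * c1 * RtoC (/ 48))%C = (gamma2 a - D * RtoC (/ 6))%C) by (rewrite G2; ring).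
    pose proof (Cmod_triangle (gamma2 a) (- (D * RtoC (/ 6)))%C) as T.
    rewrite Cmod_opp in T. unfold Cminus in E. rewrite <- E, H48 in T. lra.
  - apply Cmod_ge_0.
Qed.

Ltac cring2 := match goal with |- ?a = ?b => change (@eq C a b) end.

Lemma geom_C (q : C) : Cmod q < 1 -> is_series (fun n => (q ^ n)%C) (/ (1 - q))%C.
Proof.
  intros Hq.
  assert (Hq1 : (1 - q)%C <> RtoC 0).
  { intros E. assert (q = RtoC 1) by (replace q with (1 - (1 - q))%C by ring; rewrite E; ring).
    subst. rewrite Cmod_1 in Hq. lra. }
  assert (Hm : 0 < Cmod (1 - q)%C) by (apply Cmod_gt_0; auto).
  assert (Hs : forall n, sum_n (fun k => (q ^ k)%C) n = ((1 - q ^ (S n)) * / (1 - q))%C).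
  { intros n. pose proof (geom_sum q n) as G. revert G. generalize (sum_n (fun k => (q ^ k)%C) n).
    intros s G. revert s G. change (forall s : C, (q - 1) * s = q ^ S n - 1 -> s = (1 - q ^ S n) * / (1 - q))%C. intros s G. replace s with (/ (q - 1) * ((q - 1) * s))%C.
    rewrite G. field. split; auto. intros E'. apply Hq1. replace (1 - q)%C with (- (q - 1))%C by ring. rewrite E'. ring.
    rewrite Cmult_assoc, Cinv_l. ring. intros E. apply Hq1. replace (1 - q)%C with (- (q - 1))%C by ring. rewrite E. ring. }
  unfold is_series. apply (filterlim_locally_ball_norm (K:=C_AbsRing)). intros eps.
  assert (Hlim := is_lim_seq_geom (Cmod q) ltac:(rewrite Rabs_pos_eq; [lra|apply Cmod_ge_0])).
  assert (He : 0 < eps * Cmod (1 - q)%C) by (apply Rmult_lt_0_compat; [apply cond_pos|auto]).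
  destruct (proj1 (filterlim_locally (F:=eventually) (fun n => Cmod q ^ n) 0) Hlim (mkposreal _ He)) as [N HN].
  exists N. intros n Hn. unfold ball_norm. rewrite Hs.
  change (norm (minus ((1 - q ^ S n) * / (1 - q)) (/ (1 - q))))%C with (Cmod ((1 - q ^ S n) * / (1 - q) - / (1 - q))%C).
  replace ((1 - q ^ S n) * / (1 - q) - / (1 - q))%C with (- (q ^ S n) * / (1 - q))%C by ring.
  rewrite Cmod_mult, Cmod_opp, Cmod_pow, Cmod_inv by auto.
  assert (HB := HN (S n) ltac:(lia)). simpl in HB.
  change (Rabs (Cmod q * Cmod q ^ n - 0) < eps * Cmod (1 - q)%C) in HB.
  rewrite Rminus_0_r, Rabs_pos_eq in HB.
  2:{ apply Rmult_le_pos. apply Cmod_ge_0. apply pow_le, Cmod_ge_0. }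
  simpl. apply Rmult_lt_reg_r with (Cmod (1 - q)%C); auto.
  rewrite Rmult_assoc, Rinv_l by lra. lra.
Qed.

Lemma Re_inv_gt (w : C) : Cmod w < 1 -> 1 / 2 < Re (/ (1 - w))%C.
Proof.
  intros Hw. pose proof (Cmod2_alt w) as E.
  assert (Hw2 : Cmod w ^ 2 < 1) by (pose proof (Cmod_ge_0 w); nra).
  destruct w as [x y]. simpl in E. unfold Re, Im in E. simpl in E.
  unfold Cinv, Cminus, Cplus, Copp, RtoC. simpl.
  assert (Hx : x < 1) by nra.
  assert (Hd : 0 < (1 + - x) ^ 2 + (0 + - y) ^ 2) by nra.
  match goal with |- _ < ?a / ?b => replace (a / b) with (a * / b) by reflexivity;
    assert (Hb : 0 < b) by nra; apply Rmult_lt_reg_r with b; [exact Hb|];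
    rewrite Rmult_assoc, Rinv_l by lra end. nra.
Qed.

Definition ind0 (n : nat) : C := match n with 0%nat => RtoC 1 | _ => RtoC 0 end.

Lemma ind0_series : is_series ind0 (RtoC 1).
Proof.
  assert (H : forall n, sum_n ind0 n = RtoC 1).
  { induction n. rewrite sum_O. reflexivity. rewrite sum_Sn, IHn. simpl. change plus with Cplus.
    apply injective_projections; simpl; ring. }
  unfold is_series. apply filterlim_ext with (fun _ => RtoC 1).
  intros n. rewrite H. reflexivity. apply filterlim_const.
Qed.

Definition acoef (e1 e2 : C) (n : nat) : C :=
  match n with 0%nat => RtoC 0 | S k => ((e1 ^ k + e2 ^ k - ind0 k) * RtoC (/ INR (S k)))%C end.

Definition fex (e1 e2 : C) (z : C) : C := PS (fun n => (acoef e1 e2 n * z ^ n)%C).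

Lemma acoef_bound e1 e2 n : Cmod e1 = 1 -> Cmod e2 = 1 -> Cmod (acoef e1 e2 n) <= 3.
Proof.
  intros H1 H2. destruct n as [|k]; unfold acoef.
  - rewrite Cmod_0. lra.
  - rewrite Cmod_mult, Cmod_R.
    assert (Hk : 1 <= INR (S k)) by (rewrite S_INR; pose proof (pos_INR k); lra).
    rewrite Rabs_pos_eq by (left; apply Rinv_0_lt_compat; lra).
    assert (Hi : / INR (S k) <= 1). { rewrite <- Rinv_1. apply Rinv_le_contravar; lra. }
    assert (HX : Cmod (e1 ^ k + e2 ^ k - ind0 k)%C <= 3).
    { unfold Cminus. eapply Rle_trans. apply Cmod_triangle. rewrite Cmod_opp.
      eapply Rle_trans. apply Rplus_le_compat_r. apply Cmod_triangle.
      rewrite !Cmod_pow, H1, H2, pow1.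
      assert (Cmod (ind0 k) <= 1) by (destruct k; simpl; [rewrite Cmod_1| rewrite Cmod_0]; lra). lra. }
    assert (0 <= Cmod (e1 ^ k + e2 ^ k - ind0 k)%C) by apply Cmod_ge_0.
    assert (0 < / INR (S k)) by (apply Rinv_0_lt_compat; lra). apply Rle_trans with (3 * 1). apply Rmult_le_compat; lra. lra.
Qed.

Lemma fex_series e1 e2 : Cmod e1 = 1 -> Cmod e2 = 1 ->
  forall z, unit_disk z -> is_series (fun n => (acoef e1 e2 n * z ^ n)%C) (fex e1 e2 z).
Proof.
  intros H1 H2 z Hz. unfold unit_disk in Hz.
  assert (Hex : ex_series (fun n => (acoef e1 e2 n * z ^ n)%C)).
  { apply (@ex_series_le C_AbsRing C_CompleteNormedModule _ (fun n => 3 * Cmod z ^ n)).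
    - intros n. change (norm (acoef e1 e2 n * z ^ n)%C) with (Cmod (acoef e1 e2 n * z ^ n)%C).
      rewrite Cmod_mult, Cmod_pow. apply Rmult_le_compat_r. apply pow_le, Cmod_ge_0. apply acoef_bound; auto.
    - apply (ex_series_ext (fun n => scal 3 (Cmod z ^ n))). intros n. reflexivity.
      apply (@ex_series_scal R_AbsRing R_NormedModule). apply ex_series_geom.
      rewrite Rabs_pos_eq. auto. apply Cmod_ge_0. }
  destruct Hex as [l Hl]. unfold fex. rewrite (PS_correct _ _ Hl). exact Hl.
Qed.

Lemma dcoef_acoef e1 e2 n : dcoef (acoef e1 e2) n = (e1 ^ n + e2 ^ n - ind0 n)%C.
Proof.
  unfold dcoef, acoef.
  replace (RtoC (INR (S n)) * ((e1 ^ n + e2 ^ n - ind0 n) * RtoC (/ INR (S n))))%C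
    with ((e1 ^ n + e2 ^ n - ind0 n) * RtoC (INR (S n) * / INR (S n)))%C.
  rewrite Rinv_r. ring. apply not_0_INR. lia.
  rewrite RtoC_mult. ring.
Qed.

Lemma example_R e1 e2 : Cmod e1 = 1 -> Cmod e2 = 1 -> in_class_R (fex e1 e2) (acoef e1 e2).
Proof.
  intros H1 H2. split; [split; [|split]|].
  - reflexivity.
  - unfold acoef. replace (INR 1) with 1 by reflexivity. rewrite Rinv_1. simpl. cring.
  - apply fex_series; auto.
  - intros z Hz. set (pz := (/ (1 - e1 * z) + / (1 - e2 * z) - 1)%C).
    assert (Hm1 : Cmod (e1 * z)%C < 1) by (rewrite Cmod_mult, H1; unfold unit_disk in Hz; lra).
    assert (Hm2 : Cmod (e2 * z)%C < 1) by (rewrite Cmod_mult, H2; unfold unit_disk in Hz; lra).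
    assert (Hp : is_series (fun n => (dcoef (acoef e1 e2) n * z ^ n)%C) pz).
    { pose proof (is_series_minus _ _ _ _ (is_series_plus _ _ _ _ (geom_C _ Hm1) (geom_C _ Hm2)) ind0_series) as G.
      eapply is_series_ext. 2: exact G.
      intros n. rewrite dcoef_acoef. change plus with Cplus. change opp with Copp.
      rewrite Cpow_mult_distr, Cpow_mult_distr. destruct n.
      - simpl. apply injective_projections; simpl; ring.
      - unfold ind0. replace (RtoC 0) with (0 * 0)%C by (apply injective_projections; simpl; ring). cring. }
    exists pz. split.
    + apply (series_derive (acoef e1 e2) (fex e1 e2) (fex_series e1 e2 H1 H2) z Hz pz Hp).
    + unfold pz. pose proof (Re_inv_gt _ Hm1). pose proof (Re_inv_gt _ Hm2).
      assert (E : forall x y : C, Re (x + y)%C = Re x + Re y) by (intros [] []; reflexivity).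
      assert (E2 : forall x y : C, Re (x - y)%C = Re x - Re y) by (intros [] []; reflexivity).
      rewrite E2, E. assert (Hm : Re 1%C = 1) by reflexivity. rewrite Hm. lra.
Qed.

Lemma ex1 : exists (f : C -> C) (a : nat -> C), in_class_R f a /\ logcoef_diff a = 1 / 3.
Proof.
  exists (fex (RtoC 1) (RtoC (-1))), (acoef (RtoC 1) (RtoC (-1))). split.
  - apply example_R. apply Cmod_1. rewrite Cmod_R. unfold Rabs. destruct (Rcase_abs (-1)); lra.
  - unfold logcoef_diff.
    assert (G1 : gamma1 (acoef (RtoC 1) (RtoC (-1))) = RtoC 0).
    { unfold gamma1, acoef, ind0. replace (INR 2) with 2 by (simpl; ring).
      apply injective_projections; simpl; field. }
    assert (G2 : gamma2 (acoef (RtoC 1) (RtoC (-1))) = RtoC (1 / 3)).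
    { unfold gamma2, acoef, ind0. replace (INR 2) with 2 by (simpl; ring). replace (INR 3) with 3 by (simpl; ring).
      apply injective_projections; simpl; field. }
    rewrite G1, G2, !Cmod_R, Rabs_R0, Rabs_pos_eq by lra. ring.
Qed.

Lemma ex2 : exists (f : C -> C) (a : nat -> C), in_class_R f a /\ logcoef_diff a = - (1 / sqrt 5).
Proof.
  set (s := sqrt 5).
  assert (Hs : s * s = 5) by (apply sqrt_sqrt; lra).
  assert (Hs0 : 0 < s) by (apply sqrt_lt_R0; lra).
  set (t := 1 / s).
  assert (Ht : t * t = 1 / 5) by (unfold t; replace (1 / s * (1 / s)) with (1 / (s * s)) by (field; lra); rewrite Hs; reflexivity).
  assert (Ht0 : 0 < t) by (unfold t; apply Rdiv_lt_0_compat; lra).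
  set (e1 := (2 * t, t) : C). set (e2 := (2 * t, - t) : C).
  assert (Hm : forall x : C, Re x ^ 2 + Im x ^ 2 = 1 -> Cmod x = 1).
  { intros x Hx. unfold Cmod. replace (fst x ^ 2 + snd x ^ 2) with 1. apply sqrt_1. }
  exists (fex e1 e2), (acoef e1 e2). split.
  - apply example_R; apply Hm; unfold e1, e2; simpl; nra.
  - unfold logcoef_diff.
    assert (G1 : gamma1 (acoef e1 e2) = RtoC t).
    { unfold gamma1, acoef, ind0, e1, e2. replace (INR 2) with 2 by (simpl; ring).
      apply injective_projections; simpl; field. }
    assert (G2 : gamma2 (acoef e1 e2) = RtoC 0).
    { unfold gamma2, acoef, ind0, e1, e2. replace (INR 2) with 2 by (simpl; ring). replace (INR 3) with 3 by (simpl; ring).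
      apply injective_projections; simpl; field_simplify; try nra. }
    rewrite G1, G2, !Cmod_R, Rabs_R0, Rabs_pos_eq by lra. unfold t. ring.
Qed.

Theorem mainTheorem8 :
  (forall (f : C -> C) (a : nat -> C), in_class_R f a ->
     - (1 / sqrt 5) <= logcoef_diff a /\ logcoef_diff a <= 1 / 3)
  /\ (exists (f : C -> C) (a : nat -> C), in_class_R f a /\ logcoef_diff a = 1 / 3)
  /\ (exists (f : C -> C) (a : nat -> C), in_class_R f a /\ logcoef_diff a = - (1 / sqrt 5)).
Proof.
  split; [|split].
  - apply part1.
  - apply ex1.
  - apply ex2.
Qed.
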